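(* Let $c,d\ge 2$, let $\overline{Z}=\mathbb{C}^{N}$, $N=\binom{c+d}{2}$, be the Plücker coordinate space $\bigwedge^2(V\oplus W)$ with coordinates $T_{ij}$, $1\le i<j\le c+d$ (indices $1,\dots,c$ corresponding to $V$, $c+1,\dots,c+d$ to $W$), and let $\overline{X}\subseteq\overline{Z}$ be the affine cone over the Grassmannian $G(2,V\oplus W)$, defined by the Plücker relations $T_{ij}T_{kl}-T_{ik}T_{jl}+T_{il}T_{jk}$, $1\le i<j<k<l\le c+d$. Let the torus $\mathbb{T}^2=(\mathbb{C}^* )^2$ act diagonally on $\overline{Z}$, where $T_{ij}$ has weight $(1,1)$ if $i,j\le c$, weight $(1,0)$ if $i\le c<j$, and weight $(1,-1)$ if $c+1\le i,j$. Then the $\mathbb{T}^2$-actions on $\overline{Z}$ and on $\overline{X}$ have the same GIT-fan $\Lambda$, and the maximal cones of $\Lambda$ are $\lambda_1=\operatorname{cone}((1,1),(1,0))$ and $\lambda_2=\operatorname{cone}((1,0),(1,-1))$.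
   Context: For a torus $T$ acting on an affine variety $\overline{Y}$, for $y\in\overline{Y}$ let $\omega_y\subseteq\mathbb{X}_{\mathbb{Q}}(T)$ be the cone generated by the degrees of homogeneous $f\in\mathcal{O}(\overline{Y})$ with $f(y)\ne0$. For $w\in\mathbb{X}_{\mathbb{Q}}(T)$ the GIT-chamber is $\lambda(w)=\bigcap_{y\in\overline{Y},\,w\in\omega_y}\omega_y$, and the GIT-fan is the collection of all GIT-chambers $\lambda(w)$ (in the cone of weights $w$ for which the intersection is over a nonempty set). *)

(* Defs.v *)
From HB Require Import structures.
From mathcomp Require Import all_boot all_order all_algebra.
From mathcomp Require Import complex.
From mathcomp Require Import Rstruct.
From Stdlib Require Rdefinitions.
Set Implicit Arguments. Unset Strict Implicit. Unset Printing Implicit Defensive.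
Import Order.TTheory GRing.Theory Num.Theory.
Local Open Scope ring_scope.

Definition CC : fieldType := (Rdefinitions.R)[i].

(** Plücker index set: pairs (i,j) of 0-based indices i < j < n, n = c+d.
    Indices 0..c-1 correspond to V, c..c+d-1 to W. *)
Definition Idx (n : nat) := {p : 'I_n * 'I_n | (nat_of_ord p.1 < nat_of_ord p.2)%N}.

Definition pt (n : nat) := Idx n -> CC.

(** Coordinate T_ij of a point (0 if not i<j; only used with i<j). *)
Definition coordT n (x : pt n) (i j : 'I_n) : CC :=
  match insub (i, j) with Some p => x p | None => 0 end.

Definition wt (c d : nat) (p : Idx (c + d)) : int * int :=
  let i := (val p).1 in let j := (val p).2 in
  if (j < c)%N then (1%Z, 1%Z)
  else if (i < c)%N then (1%Z, 0%Z) else (1%Z, (-1)%Z).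

Definition chi (w : int * int) (t : CC * CC) : CC := t.1 ^ w.1 * t.2 ^ w.2.

Definition torus (t : CC * CC) : Prop := t.1 != 0 /\ t.2 != 0.

Definition act c d (t : CC * CC) (x : pt (c + d)) : pt (c + d) :=
  fun p => chi (wt p) t * x p.

Definition polyfun n (f : pt n -> CC) : Prop :=
  exists s : seq (CC * (Idx n -> nat)),
    forall x, f x = \sum_(m <- s) m.1 * \prod_(k : Idx n) x k ^+ m.2 k.

(** Homogeneous regular functions of degree w on the invariant subvariety
    Y (given as a predicate): restrictions of polynomial functions f
    with f(t.y) = chi_w(t) f(y) for all t in the torus and y in Y. *)
Definition homog c d (Y : pt (c + d) -> Prop) (w : int * int)
    (f : pt (c + d) -> CC) : Prop :=
  polyfun f /\
  forall t y, torus t -> Y y -> f (act t y) = chi w t * f y.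

Definition intQ (w : int * int) : rat * rat := (w.1%:~R, w.2%:~R).

Definition cone_gen (S : int * int -> Prop) (v : rat * rat) : Prop :=
  exists s : seq (rat * (int * int)),
    (forall m, m \in s -> 0 <= m.1 /\ S m.2) /\
    v.1 = \sum_(m <- s) m.1 * (intQ m.2).1 /\
    v.2 = \sum_(m <- s) m.1 * (intQ m.2).2.

Definition omega c d (Y : pt (c + d) -> Prop) (y : pt (c + d)) : rat * rat -> Prop :=
  cone_gen (fun w => exists f, homog Y w f /\ f y != 0).

Definition chamber c d (Y : pt (c + d) -> Prop) (w : rat * rat) : rat * rat -> Prop :=
  fun v => forall y, Y y -> omega Y y w -> omega Y y v.

Definition seteq (A B : rat * rat -> Prop) : Prop := forall v, A v <-> B v.
Definition subs (A B : rat * rat -> Prop) : Prop := forall v, A v -> B v.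

(** Membership in the GIT-fan (cones considered up to extensional equality):
    L = lambda(w) for some w in the weight cone (w in some omega_y, y in Y). *)
Definition in_GIT_fan c d (Y : pt (c + d) -> Prop) (L : rat * rat -> Prop) : Prop :=
  exists w, (exists y, Y y /\ omega Y y w) /\ seteq L (chamber Y w).

Definition max_cone c d (Y : pt (c + d) -> Prop) (L : rat * rat -> Prop) : Prop :=
  in_GIT_fan Y L /\ forall L', in_GIT_fan Y L' -> subs L L' -> subs L' L.

Definition cone2 (u1 u2 : rat * rat) (v : rat * rat) : Prop :=
  exists a b : rat, 0 <= a /\ 0 <= b /\
    v.1 = a * u1.1 + b * u2.1 /\ v.2 = a * u1.2 + b * u2.2.

Definition Zbar c d : pt (c + d) -> Prop := fun _ => True.

Definition Xbar c d : pt (c + d) -> Prop := fun x =>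
  forall i j k l : 'I_(c + d), (i < j)%N -> (j < k)%N -> (k < l)%N ->
    coordT x i j * coordT x k l - coordT x i k * coordT x j l
      + coordT x i l * coordT x j k = 0.

(* Main.v *)
Require Import Defs.
From HB Require Import structures.
From mathcomp Require Import all_boot all_order all_algebra complex Rstruct ring lra zify.
From Stdlib Require Classical.
Import Order.TTheory GRing.Theory Num.Theory.
Local Open Scope ring_scope.
Lemma natCC (m n : nat) : (m%:R : CC) = n%:R -> m = n.
Proof. move=> h. apply/eqP. rewrite -(@eqr_nat (Rdefinitions.R)[i]). by apply/eqP. Qed.

Lemma key (c d : nat) (Y : pt (c+d) -> Prop) (w : int*int) f y (a b : int) :
  homog Y w f -> Y y -> f y != 0 ->
  (forall p, y p != 0 -> 0 <= a * (wt p).1 + b * (wt p).2) ->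
  0 <= a * w.1 + b * w.2.
Proof.
move=> [[s0 hf] hom] Yy fy0 hdual.
pose e (p : Idx (c+d)) := a * (wt p).1 + b * (wt p).2.
pose n (p : Idx (c+d)) := `|e p|%N.
pose P : {poly CC} := \sum_(m <- s0) m.1%:P * \prod_k ((y k)%:P * 'X^(n k)) ^+ m.2 k.
have hP : forall s : CC, s != 0 -> P.[s] = s ^ (a * w.1 + b * w.2) * f y.
  move=> s s0n.
  have tor : torus (s ^ a, s ^ b) by split; apply: expfz_neq0.
  have hchi : chi w (s^a, s^b) = s^(a*w.1+b*w.2) by rewrite /chi /= !exprz_exp expfzDr.
  rewrite -hchi -(hom _ _ tor Yy) hf /P horner_sum.
  apply: eq_bigr => m _. rewrite hornerCM horner_prod. congr (_ * _).
  apply: eq_bigr => k _. rewrite horner_exp hornerM hornerC hornerXn. congr (_ ^+ _).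
  rewrite /act /chi /=.
  have [->|yk0] := eqVneq (y k) 0; first by rewrite !mulr0 mul0r.
  rewrite !exprz_exp -expfzDr // mulrC; congr (_ * _).
  have he := hdual k yk0.
  have -> : a * (wt k).1 + b * (wt k).2 = (n k)%:Z by rewrite /n abszE ger0_norm.
  by [].
move: hP; set K := a * w.1 + b * w.2 => hP.
case: (lerP 0 K) => // Kneg.
pose N := `|K|%N.
have KE : K = - (N%:Z) by rewrite /N abszE ltr0_norm // opprK.
have N0 : (N != 0)%N by rewrite /N absz_eq0 ltr0_neq0.
pose Q := 'X^N * P - (f y)%:P.
have hQ : forall s, s != 0 -> Q.[s] = 0.
  move=> s sn; rewrite /Q hornerD hornerN hornerM hornerXn hornerC hP // KE.
  by rewrite -exprnN mulrA mulfV ?expf_neq0 // mul1r subrr.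
have Q0 : Q.[0] = - f y.
  by rewrite /Q hornerD hornerN hornerM hornerXn hornerC expr0n (negbTE N0) mul0r add0r.
have Qn0 : Q != 0.
  apply/eqP=> Qz; move: Q0; rewrite Qz horner0 => /eqP; rewrite eq_sym oppr_eq0.
  by rewrite (negbTE fy0).
have := max_poly_roots (rs := [seq (i.+1)%:R | i <- iota 0 (size Q)]) Qn0.
rewrite size_map size_iota ltnn; apply.
  apply/allP => x /mapP [i _ ->]; rewrite /root hQ //.
  by apply/eqP => h; have := @natCC i.+1 0 h.
by rewrite map_inj_uniq ?iota_uniq // => i j /natCC [].
Qed.

Section S.
Variables (c d : nat).
Local Notation n := (c + d).

Definition hA (y : pt n) := exists p, y p != 0 /\ wt p = (1%Z, 1%Z).
Definition hB (y : pt n) := exists p, y p != 0 /\ wt p = (1%Z, 0%Z).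
Definition hC (y : pt n) := exists p, y p != 0 /\ wt p = (1%Z, (-1)%Z).

Lemma wt_cases (p : Idx n) : wt p = (1%Z, 1%Z) \/ wt p = (1%Z, 0%Z) \/ wt p = (1%Z, (-1)%Z).
Proof. rewrite /wt; case: ifP => _; first by left. by case: ifP => _; right; [left|right]. Qed.

Lemma dualP (y : pt n) (a b : int) :
  (hA y -> 0 <= a + b) -> (hB y -> 0 <= a) -> (hC y -> 0 <= a - b) ->
  forall p, y p != 0 -> 0 <= a * (wt p).1 + b * (wt p).2.
Proof.
move=> hA' hB' hC' p yp; case: (wt_cases p) => [e|[e|e]]; rewrite e /=.
- by rewrite !mulr1; apply: hA'; exists p.
- by rewrite mulr1 mulr0 addr0; apply: hB'; exists p.
- by rewrite mulr1 mulrN1; apply: hC'; exists p.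
Qed.

Lemma lin_cone (a b : rat) (s : seq (rat * (int * int))) :
  (forall m, m \in s -> 0 <= m.1 /\ 0 <= a * (intQ m.2).1 + b * (intQ m.2).2) ->
  0 <= a * (\sum_(m <- s) m.1 * (intQ m.2).1) + b * (\sum_(m <- s) m.1 * (intQ m.2).2).
Proof.
elim: s => [|m s IH] h; first by rewrite !big_nil !mulr0 addr0.
rewrite !big_cons.
have [h1 h2] := h m (mem_head _ _).
have h3 : 0 <= a * (\sum_(m0 <- s) m0.1 * (intQ m0.2).1) + b * (\sum_(m0 <- s) m0.1 * (intQ m0.2).2).
  by apply: IH => m' hm'; apply: h; rewrite in_cons hm' orbT.
have -> : a * (m.1 * (intQ m.2).1 + \sum_(m0 <- s) m0.1 * (intQ m0.2).1) +
    b * (m.1 * (intQ m.2).2 + \sum_(m0 <- s) m0.1 * (intQ m0.2).2) =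
    m.1 * (a * (intQ m.2).1 + b * (intQ m.2).2) +
    (a * (\sum_(m0 <- s) m0.1 * (intQ m0.2).1) + b * (\sum_(m0 <- s) m0.1 * (intQ m0.2).2)) by ring.
by rewrite addr_ge0 // mulr_ge0.
Qed.

Lemma gen_dual (Y : pt n -> Prop) y (a b : int) : Y y ->
  (forall p, y p != 0 -> 0 <= a * (wt p).1 + b * (wt p).2) ->
  forall v, omega Y y v -> 0 <= a%:~R * v.1 + b%:~R * v.2.
Proof.
move=> Yy hd v [s [hs [-> ->]]]; apply: lin_cone => m ms.
have [m1 [f [hf fy]]] := hs m ms; split=> //.
rewrite /intQ /= -!intrM -intrD ler0z.
exact: key hf Yy fy hd.
Qed.

Definition Kin (A B C : Prop) (v : rat*rat) : Prop :=
  0 <= v.1 /\ 0 <= v.1 - v.2 /\ 0 <= v.1 + v.2 /\ (~C -> 0 <= v.2) /\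
  (~A -> v.2 <= 0) /\ (~B /\ ~C -> v.1 <= v.2) /\ (~A /\ ~B -> v.1 + v.2 <= 0).
Definition KinY (y : pt n) := Kin (hA y) (hB y) (hC y).

Lemma omega_Kin (Y : pt n -> Prop) y v : Y y -> omega Y y v -> KinY y v.
Proof.
move=> Yy om.
have k1 : 0 <= (1:int)%:~R * v.1 + (0:int)%:~R * v.2.
  by apply: (@gen_dual Y y _ _ Yy _ v om); apply: dualP.
have k2 : 0 <= (1:int)%:~R * v.1 + (-1:int)%:~R * v.2.
  by apply: (@gen_dual Y y _ _ Yy _ v om); apply: dualP.
have k3 : 0 <= (1:int)%:~R * v.1 + (1:int)%:~R * v.2.
  by apply: (@gen_dual Y y _ _ Yy _ v om); apply: dualP.
have k4 : ~ hC y -> 0 <= (0:int)%:~R * v.1 + (1:int)%:~R * v.2.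
  by move=> nC; apply: (@gen_dual Y y _ _ Yy _ v om); apply: dualP => // /nC.
have k5 : ~ hA y -> 0 <= (0:int)%:~R * v.1 + (-1:int)%:~R * v.2.
  by move=> nA; apply: (@gen_dual Y y _ _ Yy _ v om); apply: dualP => // /nA.
have k6 : ~ hB y /\ ~ hC y -> 0 <= (-1:int)%:~R * v.1 + (1:int)%:~R * v.2.
  by move=> [nB nC]; apply: (@gen_dual Y y _ _ Yy _ v om); apply: dualP => // [/nB|/nC].
have k7 : ~ hA y /\ ~ hB y -> 0 <= (-1:int)%:~R * v.1 + (-1:int)%:~R * v.2.
  by move=> [nA nB]; apply: (@gen_dual Y y _ _ Yy _ v om); apply: dualP => // [/nA|/nB].
have E1 : (1:int)%:~R = 1 :> rat by [].
have E0 : (0:int)%:~R = 0 :> rat by [].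
have EN : (-1:int)%:~R = -1 :> rat by [].
rewrite !E1 !E0 !EN in k1 k2 k3 k4 k5 k6 k7.
rewrite /KinY /Kin; split; [lra|split; [lra|split; [lra|split]]].
  by move=> h; have := k4 h; lra.
split; first by move=> h; have := k5 h; lra.
split; first by move=> h; have := k6 h; lra.
by move=> h; have := k7 h; lra.
Qed.

Lemma coordS (Y : pt n -> Prop) (y : pt n) p : y p != 0 ->
  exists f, homog Y (wt p) f /\ f y != 0.
Proof.
move=> yp; exists (fun x => x p); split=> //; split=> //.
exists [:: (1, fun k => nat_of_bool (k == p))] => x.
rewrite big_cons big_nil addr0 mul1r (bigD1 p) //= eqxx expr1 big1 ?mulr1 //.
by move=> k /negbTE ->; rewrite expr0.
Qed.

Lemma cone_two (S : int * int -> Prop) u1 u2 (a b : rat) (v : rat * rat) :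
  S u1 -> S u2 -> 0 <= a -> 0 <= b ->
  v.1 = a * (intQ u1).1 + b * (intQ u2).1 ->
  v.2 = a * (intQ u1).2 + b * (intQ u2).2 -> cone_gen S v.
Proof.
move=> h1 h2 ha hb e1 e2; exists [:: (a, u1); (b, u2)]; split.
  by move=> m; rewrite !inE => /orP [/eqP -> | /eqP ->].
by rewrite !big_cons !big_nil !addr0.
Qed.

Lemma cone_zero (S : int * int -> Prop) (v : rat * rat) : v = (0, 0) -> cone_gen S v.
Proof. by move=> ->; exists [::]; rewrite !big_nil. Qed.

Lemma Kin_omega (Y : pt n -> Prop) y v : KinY y v -> omega Y y v.
Proof.
case: v => v1 v2; rewrite /KinY /Kin /= => [[k1 [k2 [k3 [k4 [k5 [k6 k7]]]]]]].
have SA : hA y -> exists f, homog Y (1%Z, 1%Z) f /\ f y != 0.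
  by move=> [p [hp e]]; rewrite -e; exact: coordS.
have SB : hB y -> exists f, homog Y (1%Z, 0%Z) f /\ f y != 0.
  by move=> [p [hp e]]; rewrite -e; exact: coordS.
have SC : hC y -> exists f, homog Y (1%Z, (-1)%Z) f /\ f y != 0.
  by move=> [p [hp e]]; rewrite -e; exact: coordS.
have E1 : (1:int)%:~R = 1 :> rat by [].
have E0 : (0:int)%:~R = 0 :> rat by [].
have EN : (-1:int)%:~R = -1 :> rat by [].
rewrite /omega.
case: (Classical_Prop.classic (hA y)) => a; case: (Classical_Prop.classic (hB y)) => b; case: (Classical_Prop.classic (hC y)) => c'.
- apply: (@cone_two (fun w => exists f, homog Y w f /\ f y != 0) _ _ ((v1 + v2) / 2) ((v1 - v2) / 2) _ (SA a) (SC c'));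
    rewrite /intQ /= ?E1 ?EN; lra.
- have := k4 c'; move=> h4.
  apply: (@cone_two (fun w => exists f, homog Y w f /\ f y != 0) _ _ v2 (v1 - v2) _ (SA a) (SB b));
    rewrite /intQ /= ?E1 ?E0; lra.
- apply: (@cone_two (fun w => exists f, homog Y w f /\ f y != 0) _ _ ((v1 + v2) / 2) ((v1 - v2) / 2) _ (SA a) (SC c'));
    rewrite /intQ /= ?E1 ?EN; lra.
- have := k4 c'; have := k6 (conj b c') => h6 h4.
  apply: (@cone_two (fun w => exists f, homog Y w f /\ f y != 0) _ _ v1 0 _ (SA a) (SA a));
    rewrite /intQ /= ?E1 ?E0; lra.
- have := k5 a => h5.
  apply: (@cone_two (fun w => exists f, homog Y w f /\ f y != 0) _ _ (v1 + v2) (- v2) _ (SB b) (SC c'));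
    rewrite /intQ /= ?E1 ?E0 ?EN; lra.
- have := k5 a => h5; have := k4 c' => h4.
  apply: (@cone_two (fun w => exists f, homog Y w f /\ f y != 0) _ _ v1 0 _ (SB b) (SB b));
    rewrite /intQ /= ?E1 ?E0; lra.
- have := k7 (conj a b) => h7.
  apply: (@cone_two (fun w => exists f, homog Y w f /\ f y != 0) _ _ v1 0 _ (SC c') (SC c'));
    rewrite /intQ /= ?E1 ?EN; lra.
- have := k5 a => h5; have := k4 c' => h4; have := k6 (conj b c') => h6.
  apply: cone_zero; congr (_, _); lra.
Qed.

Definition pnt (S : nat -> nat -> bool) : pt n :=
  fun p => if S (val p).1 (val p).2 then 1 else 0.

Lemma coordT_nz (S : nat -> nat -> bool) (i j : 'I_n) : coordT (pnt S) i j != 0 -> S i j.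
Proof.
rewrite /coordT; case: insubP => [p _ pv|_]; last by rewrite eqxx.
by rewrite /pnt pv /=; case: (S i j) => //; rewrite eqxx.
Qed.

Lemma star_Xbar (S : nat -> nat -> bool) h : (forall i j, S i j -> (i == h) || (j == h)) -> Xbar (pnt S).
Proof.
move=> hS.
have P0 : forall i j k l : 'I_n, (i != k :> nat) -> (i != l :> nat) ->
    (j != k :> nat) -> (j != l :> nat) ->
    coordT (pnt S) i j * coordT (pnt S) k l = 0.
  move=> i j k l ik il jk jl; apply/eqP; rewrite mulf_eq0; apply/negPn/negP.
  rewrite negb_or => /andP [h1 h2].
  move: (hS _ _ (coordT_nz _ _ _ h1)) (hS _ _ (coordT_nz _ _ _ h2)) ik il jk jl.
  by case/orP => /eqP -> ; case/orP => /eqP -> ; rewrite ?eqxx.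
move=> i j k l hij hjk hkl.
have L1 := ltn_trans hij hjk; have L2 := ltn_trans L1 hkl; have L3 := ltn_trans hjk hkl.
have ne : forall x y : nat, (x < y)%N -> x != y by move=> x y; rewrite neq_ltn => ->.
have ne' : forall x y : nat, (x < y)%N -> y != x by move=> x y; rewrite neq_ltn => ->; rewrite orbT.
have e1 : coordT (pnt S) i j * coordT (pnt S) k l = 0.
  by apply: P0; [exact: ne L1|exact: ne L2|exact: ne hjk|exact: ne L3].
have e2 : coordT (pnt S) i k * coordT (pnt S) j l = 0.
  by apply: P0; [exact: ne hij|exact: ne L2|exact: ne' hjk|exact: ne hkl].
have e3 : coordT (pnt S) i l * coordT (pnt S) j k = 0.
  by apply: P0; [exact: ne hij|exact: ne L1|exact: ne' L3|exact: ne' hkl].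
by rewrite e1 e2 e3 subrr addr0.
Qed.

Lemma hA_pnt (S : nat -> nat -> bool) : hA (pnt S) <-> exists i j, [/\ (i < j)%N, (j < n)%N, S i j & (j < c)%N].
Proof.
split.
  move=> [p [hp e]]; exists (val p).1, (val p).2; split.
  - exact: (valP p).
  - exact: ltn_ord.
  - by move: hp; rewrite /pnt; case: ifP => //; rewrite eqxx.
  - by move: e; rewrite /wt; case: ifP => //; case: ifP => _ _ //.
move=> [i [j [ij jn Sij jc]]].
exists (exist _ (Ordinal (ltn_trans ij jn), Ordinal jn) ij); split.
  by rewrite /pnt /= Sij oner_eq0.
by rewrite /wt /= jc.
Qed.

Lemma hB_pnt (S : nat -> nat -> bool) : hB (pnt S) <->
  exists i j, [/\ (i < j)%N, (j < n)%N, S i j, ~~ (j < c)%N & (i < c)%N].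
Proof.
split.
  move=> [p [hp e]]; exists (val p).1, (val p).2; split.
  - exact: (valP p).
  - exact: ltn_ord.
  - by move: hp; rewrite /pnt; case: ifP => //; rewrite eqxx.
  - by move: e; rewrite /wt; case: ifP => //.
  - by move: e; rewrite /wt; case: ifP => //; case: ifP => _ _ //.
move=> [i [j [ij jn Sij jc ic]]].
exists (exist _ (Ordinal (ltn_trans ij jn), Ordinal jn) ij); split.
  by rewrite /pnt /= Sij oner_eq0.
by rewrite /wt /= (negbTE jc) ic.
Qed.

Lemma hC_pnt (S : nat -> nat -> bool) : hC (pnt S) <->
  exists i j, [/\ (i < j)%N, (j < n)%N, S i j, ~~ (j < c)%N & ~~ (i < c)%N].
Proof.
split.
  move=> [p [hp e]]; exists (val p).1, (val p).2; split.
  - exact: (valP p).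
  - exact: ltn_ord.
  - by move: hp; rewrite /pnt; case: ifP => //; rewrite eqxx.
  - by move: e; rewrite /wt; case: ifP => //.
  - by move: e; rewrite /wt; case: ifP => //; case: ifP => _ _ //.
move=> [i [j [ij jn Sij jc ic]]].
exists (exist _ (Ordinal (ltn_trans ij jn), Ordinal jn) ij); split.
  by rewrite /pnt /= Sij oner_eq0.
by rewrite /wt /= (negbTE jc) (negbTE ic).
Qed.

Definition S0 : nat -> nat -> bool := fun _ _ => false.
Definition S1 : nat -> nat -> bool := fun i j => (i == 0)%N && (j == 1)%N.
Definition S2 : nat -> nat -> bool := fun i j => (i == 0)%N && (j == c)%N.
Definition S3 : nat -> nat -> bool := fun i j => (i == c)%N && (j == c.+1)%N.
Definition S12 : nat -> nat -> bool := fun i j => (i == 0)%N && ((j == 1)%N || (j == c)%N).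
Definition S23 : nat -> nat -> bool :=
  fun i j => ((i == 0)%N && (j == c)%N) || ((i == c)%N && (j == c.+1)%N).

Hypotheses (hc : (2 <= c)%N) (hd : (2 <= d)%N).

Ltac negty := first [move=> /hA_pnt [i [j [? ? + ?]]] | move=> /hB_pnt [i [j [? ? + ? ?]]]
  | move=> /hC_pnt [i [j [? ? + ? ?]]]]; rewrite /S0 /S1 /S2 /S3 /S12 /S23; lia.

Lemma ty0 : ~ hA (pnt S0) /\ ~ hB (pnt S0) /\ ~ hC (pnt S0).
Proof. by split; [|split]; negty. Qed.

Ltac posty i j := first [apply/hA_pnt | apply/hB_pnt | apply/hC_pnt];
  exists i, j; split => //;
  rewrite /S0 /S1 /S2 /S3 /S12 /S23; lia.

Lemma ty1 : hA (pnt S1) /\ ~ hB (pnt S1) /\ ~ hC (pnt S1).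
Proof.
split; [posty 0%N 1%N|split; negty].
Qed.
Lemma ty2 : ~ hA (pnt S2) /\ hB (pnt S2) /\ ~ hC (pnt S2).
Proof. split; [negty|split; [posty 0%N c|negty]]. Qed.
Lemma ty3 : ~ hA (pnt S3) /\ ~ hB (pnt S3) /\ hC (pnt S3).
Proof. split; [negty|split; [negty|posty c c.+1]]. Qed.
Lemma ty12 : hA (pnt S12) /\ hB (pnt S12) /\ ~ hC (pnt S12).
Proof. split; [posty 0%N 1%N|split; [posty 0%N c|negty]]. Qed.
Lemma ty23 : ~ hA (pnt S23) /\ hB (pnt S23) /\ hC (pnt S23).
Proof. split; [negty|split; [posty 0%N c|posty c c.+1]]. Qed.

Lemma X0 : Xbar (pnt S0). Proof. by apply: (@star_Xbar _ 0%N). Qed.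
Lemma X1 : Xbar (pnt S1). Proof. apply: (@star_Xbar _ 0%N) => i j; rewrite /S1; lia. Qed.
Lemma X2 : Xbar (pnt S2). Proof. apply: (@star_Xbar _ 0%N) => i j; rewrite /S2; lia. Qed.
Lemma X3 : Xbar (pnt S3). Proof. apply: (@star_Xbar _ c) => i j; rewrite /S3; lia. Qed.
Lemma X12 : Xbar (pnt S12). Proof. apply: (@star_Xbar _ 0%N) => i j; rewrite /S12; lia. Qed.
Lemma X23 : Xbar (pnt S23). Proof. apply: (@star_Xbar _ c) => i j; rewrite /S23; lia. Qed.

Lemma Kin_iff (A B C A' B' C' : Prop) v :
  (A <-> A') -> (B <-> B') -> (C <-> C') -> Kin A B C v <-> Kin A' B' C' v.
Proof. rewrite /Kin => eA eB eC; tauto. Qed.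


Lemma K_AC (A B C : Prop) v : A -> C ->
  Kin A B C v <-> (0 <= v.1 - v.2 /\ 0 <= v.1 + v.2).
Proof.
move=> a c'; rewrite /Kin; split.
  by move=> [h1 [h2 [h3 _]]].
move=> [h2 h3]; split; first lra.
do 2 (split => //).
split; first by move=> /(_ c').
split; first by move=> /(_ a).
split; first by move=> [_ /(_ c')].
by move=> [/(_ a)].
Qed.

Lemma K_ABnC (A B C : Prop) v : A -> B -> ~ C ->
  Kin A B C v <-> (0 <= v.2 /\ 0 <= v.1 - v.2).
Proof.
move=> a b c'; rewrite /Kin; split.
  by move=> [h1 [h2 [h3 [h4 _]]]]; split => //; apply: h4.
move=> [h2 h3]; split; first lra.
split => //. split; first lra.
split; first by [].
split; first by move=> /(_ a).
split; first by move=> [/(_ b)].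
by move=> [/(_ a)].
Qed.

Lemma K_nABC (A B C : Prop) v : ~ A -> B -> C ->
  Kin A B C v <-> (v.2 <= 0 /\ 0 <= v.1 + v.2).
Proof.
move=> a b c'; rewrite /Kin; split.
  by move=> [h1 [h2 [h3 [h4 [h5 _]]]]]; split => //; apply: h5.
move=> [h2 h3]; split; first lra.
split; first lra. split => //.
split; first by move=> /(_ c').
split; first by [].
split; first by move=> [/(_ b)].
by move=> [_ /(_ b)].
Qed.

Lemma reduce (y : pt n) w : KinY y w ->
  exists y', Xbar y' /\ KinY y' w /\ (forall v, KinY y' v -> KinY y v).
Proof.
move=> Kw.
have same : forall y', Xbar y' -> (hA y' <-> hA y) -> (hB y' <-> hB y) ->
    (hC y' <-> hC y) -> exists y'0, Xbar y'0 /\ KinY y'0 w /\ (forall v, KinY y'0 v -> KinY y v).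
  move=> y' Xy' eA eB eC; exists y'; split=> //; split.
    exact: (proj2 (Kin_iff _ _ _ _ _ _ w eA eB eC) Kw).
  by move=> v Kv; exact: (proj1 (Kin_iff _ _ _ _ _ _ v eA eB eC) Kv).
case: (Classical_Prop.classic (hA y)) => a; case: (Classical_Prop.classic (hB y)) => b;
  case: (Classical_Prop.classic (hC y)) => c'.
- case: (lerP 0 w.2) => hw.
    exists (pnt S12); split; first exact: X12.
    have [t1 [t2 t3]] := ty12; move: Kw; rewrite /KinY (K_AC _ _ _ _ a c') => Kw.
    rewrite (K_ABnC _ _ _ _ t1 t2 t3); split; first lra.
    by move=> v; rewrite (K_ABnC _ _ _ _ t1 t2 t3) (K_AC _ _ _ _ a c'); lra.
  exists (pnt S23); split; first exact: X23.
  have [t1 [t2 t3]] := ty23; move: Kw; rewrite /KinY (K_AC _ _ _ _ a c') => Kw.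
  rewrite (K_nABC _ _ _ _ t1 t2 t3); split; first lra.
  by move=> v; rewrite (K_nABC _ _ _ _ t1 t2 t3) (K_AC _ _ _ _ a c'); lra.
- have [t1 [t2 t3]] := ty12; apply: same; [exact: X12|tauto|tauto|tauto].
- case: (lerP 0 w.2) => hw.
    exists (pnt S12); split; first exact: X12.
    have [t1 [t2 t3]] := ty12; move: Kw; rewrite /KinY (K_AC _ _ _ _ a c') => Kw.
    rewrite (K_ABnC _ _ _ _ t1 t2 t3); split; first lra.
    by move=> v; rewrite (K_ABnC _ _ _ _ t1 t2 t3) (K_AC _ _ _ _ a c'); lra.
  exists (pnt S23); split; first exact: X23.
  have [t1 [t2 t3]] := ty23; move: Kw; rewrite /KinY (K_AC _ _ _ _ a c') => Kw.
  rewrite (K_nABC _ _ _ _ t1 t2 t3); split; first lra.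
  by move=> v; rewrite (K_nABC _ _ _ _ t1 t2 t3) (K_AC _ _ _ _ a c'); lra.
- have [t1 [t2 t3]] := ty1; apply: same; [exact: X1|tauto|tauto|tauto].
- have [t1 [t2 t3]] := ty23; apply: same; [exact: X23|tauto|tauto|tauto].
- have [t1 [t2 t3]] := ty2; apply: same; [exact: X2|tauto|tauto|tauto].
- have [t1 [t2 t3]] := ty3; apply: same; [exact: X3|tauto|tauto|tauto].
- have [t1 [t2 t3]] := ty0; apply: same; [exact: X0|tauto|tauto|tauto].
Qed.

Lemma cham_eq w : seteq (chamber (@Zbar c d) w) (chamber (@Xbar c d) w).
Proof.
move=> v; split.
  move=> h y Xy om.
  have Kw := omega_Kin _ _ _ Xy om.
  have omZ := h y I (Kin_omega (@Zbar c d) _ _ Kw).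
  exact: (Kin_omega _ _ _ (omega_Kin (@Zbar c d) _ _ I omZ)).
move=> h y _ om.
have Kw := omega_Kin (@Zbar c d) _ _ I om.
have [y' [Xy' [Kw' sub]]] := reduce _ _ Kw.
have om' := h y' Xy' (Kin_omega _ _ _ Kw').
apply: Kin_omega; apply: sub; exact: (omega_Kin _ _ _ Xy' om').
Qed.

Lemma wcone_eq w : (exists y, @Zbar c d y /\ omega (@Zbar c d) y w) <->
  (exists y, @Xbar c d y /\ omega (@Xbar c d) y w).
Proof.
split.
  move=> [y [_ om]].
  have [y' [Xy' [Kw' _]]] := reduce _ _ (omega_Kin (@Zbar c d) _ _ I om).
  by exists y'; split => //; apply: Kin_omega.
move=> [y [Xy om]]; exists y; split => //.
exact: (Kin_omega _ _ _ (omega_Kin _ _ _ Xy om)).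
Qed.

Definition lam1 (v : rat * rat) := 0 <= v.2 /\ v.2 <= v.1.
Definition lam2 (v : rat * rat) := v.2 <= 0 /\ 0 <= v.1 + v.2.

Lemma cone2E1 v : cone2 (1, 1) (1, 0) v <-> lam1 v.
Proof.
rewrite /lam1; split => [[a [b [ha [hb [e1 e2]]]]]|[h1 h2]].
  rewrite e1 e2 /=; lra.
exists v.2, (v.1 - v.2); split => //; split; first lra.
by split => /=; lra.
Qed.

Lemma cone2E2 v : cone2 (1, 0) (1, -1) v <-> lam2 v.
Proof.
rewrite /lam2; split => [[a [b [ha [hb [e1 e2]]]]]|[h1 h2]].
  rewrite e1 e2 /=; lra.
exists (v.1 + v.2), (- v.2); split; first lra. split; first lra.
by split => /=; lra.
Qed.

Lemma cham_sub1 w : 0 <= w.1 - w.2 -> 0 <= w.2 ->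
  forall v, chamber (@Xbar c d) w v -> lam1 v.
Proof.
move=> h1 h2 v h.
have [t1 [t2 t3]] := ty12.
have Kw : KinY (pnt S12) w by rewrite /KinY (K_ABnC _ _ _ _ t1 t2 t3).
have om := h _ X12 (Kin_omega _ _ _ Kw).
have := omega_Kin _ _ _ X12 om.
rewrite /KinY (K_ABnC _ _ _ _ t1 t2 t3) /lam1; lra.
Qed.

Lemma cham_sub2 w : 0 <= w.1 + w.2 -> w.2 <= 0 ->
  forall v, chamber (@Xbar c d) w v -> lam2 v.
Proof.
move=> h1 h2 v h.
have [t1 [t2 t3]] := ty23.
have Kw : KinY (pnt S23) w by rewrite /KinY (K_nABC _ _ _ _ t1 t2 t3).
have om := h _ X23 (Kin_omega _ _ _ Kw).
have := omega_Kin _ _ _ X23 om.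
rewrite /KinY (K_nABC _ _ _ _ t1 t2 t3) /lam2; lra.
Qed.

Lemma cham_sup1 v : lam1 v -> chamber (@Xbar c d) (2, 1) v.
Proof.
rewrite /lam1 => [[l1 l2]] y Xy om.
have Kw := omega_Kin _ _ _ Xy om; apply: Kin_omega; move: Kw.
rewrite /KinY /Kin /= => [[h1 [h2 [h3 [h4 [h5 [h6 h7]]]]]]].
split; first lra. split; first lra. split; first lra.
split; first by move=> _.
split; first by move=> /h5; lra.
split; first by move=> /h6; lra.
by move=> /h7; lra.
Qed.

Lemma cham_sup2 v : lam2 v -> chamber (@Xbar c d) (2, -1) v.
Proof.
rewrite /lam2 => [[l1 l2]] y Xy om.
have Kw := omega_Kin _ _ _ Xy om; apply: Kin_omega; move: Kw.
rewrite /KinY /Kin /= => [[h1 [h2 [h3 [h4 [h5 [h6 h7]]]]]]].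
split; first lra. split; first lra. split; first lra.
split; first by move=> /h4; lra.
split; first by move=> _.
split; first by move=> /h6; lra.
by move=> /h7; lra.
Qed.

Lemma fan1 : in_GIT_fan (@Xbar c d) (cone2 (1, 1) (1, 0)).
Proof.
exists (2, 1); split.
  exists (pnt S12); split; first exact: X12.
  have [t1 [t2 t3]] := ty12.
  by apply: Kin_omega; rewrite /KinY (K_ABnC _ _ _ _ t1 t2 t3) /=; split; lra.
move=> v; rewrite cone2E1; split; first exact: cham_sup1.
by apply: cham_sub1 => /=; lra.
Qed.

Lemma fan2 : in_GIT_fan (@Xbar c d) (cone2 (1, 0) (1, -1)).
Proof.
exists (2, -1); split.
  exists (pnt S23); split; first exact: X23.
  have [t1 [t2 t3]] := ty23.
  by apply: Kin_omega; rewrite /KinY (K_nABC _ _ _ _ t1 t2 t3) /=; split; lra.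
move=> v; rewrite cone2E2; split; first exact: cham_sup2.
by apply: cham_sub2 => /=; lra.
Qed.

Lemma fan_sub L : in_GIT_fan (@Xbar c d) L -> subs L lam1 \/ subs L lam2.
Proof.
move=> [w [[y [Xy om]] hL]].
have := omega_Kin _ _ _ Xy om; rewrite /KinY /Kin => [[_ [k2 [k3 _]]]].
case: (lerP 0 w.2) => hw.
  by left => v /hL; apply: cham_sub1.
by right => v /hL; apply: cham_sub2 => //; apply: ltW.
Qed.
End S.

Theorem proposition2p1 (c d : nat) (hc : (2 <= c)%N) (hd : (2 <= d)%N) :
  (forall L, in_GIT_fan (@Zbar c d) L <-> in_GIT_fan (@Xbar c d) L) /\
  (forall L, max_cone (@Xbar c d) L <->
     (seteq L (cone2 (1, 1) (1, 0)) \/ seteq L (cone2 (1, 0) (1, -1)))).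
Proof.
split.
  move=> L; split => [[w [hw hL]]|[w [hw hL]]]; exists w; split.
  - exact: (proj1 (@wcone_eq c d hc hd w) hw).
  - move=> v; split => [/hL/(proj1 (@cham_eq c d hc hd w v))//|/(proj2 (@cham_eq c d hc hd w v))/hL//].
  - exact: (proj2 (@wcone_eq c d hc hd w) hw).
  - move=> v; split => [/hL/(proj2 (@cham_eq c d hc hd w v))//|/(proj1 (@cham_eq c d hc hd w v))/hL//].
move=> L; split.
  move=> [fanL maxL]; case: (@fan_sub c d hc hd _ fanL) => sub.
    left; have sup := maxL _ (@fan1 c d hc hd) (fun v Lv => proj2 (cone2E1 v) (sub v Lv)).
    move=> v; split => [Lv|Cv]; [exact: (proj2 (cone2E1 v) (sub v Lv))|exact: sup].
  right; have sup := maxL _ (@fan2 c d hc hd) (fun v Lv => proj2 (cone2E2 v) (sub v Lv)).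
  move=> v; split => [Lv|Cv]; [exact: (proj2 (cone2E2 v) (sub v Lv))|exact: sup].
case=> eL.
  split.
    have [w [hw hC]] := @fan1 c d hc hd; exists w; split => // v.
    split => [/(proj1 (eL v))/(proj1 (hC v))//|/(proj2 (hC v))/(proj2 (eL v))//].
  move=> L' fanL' LL'; case: (@fan_sub c d hc hd _ fanL') => sub'.
    by move=> v /sub' /(proj2 (cone2E1 v)) /(proj2 (eL v)).
  have L11 : L (1, 1) by apply/(proj2 (eL _))/(proj2 (cone2E1 _)); rewrite /lam1 /=; lra.
  have := sub' _ (LL' _ L11); rewrite /lam2 /=; lra.
split.
  have [w [hw hC]] := @fan2 c d hc hd; exists w; split => // v.
  split => [/(proj1 (eL v))/(proj1 (hC v))//|/(proj2 (hC v))/(proj2 (eL v))//].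
move=> L' fanL' LL'; case: (@fan_sub c d hc hd _ fanL') => sub'.
  have L1m : L (1, -1) by apply/(proj2 (eL _))/(proj2 (cone2E2 _)); rewrite /lam2 /=; lra.
  have := sub' _ (LL' _ L1m); rewrite /lam1 /=; lra.
by move=> v /sub' /(proj2 (cone2E2 v)) /(proj2 (eL v)).
Qed.
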